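(* Let $B$ be an aperiodic Bratteli diagram of rank $d$. (1) $\mu(\mathcal O_B(1))=1$ if and only if there is a strictly increasing sequence $(n_k)_{k\ge1}$ with $\sum_{k=1}^\infty\mu(G_{n_k}^{n_{k+1},1})=\infty$. (2) Let $1<j\le d$. Then $\mu(\mathcal O_B(j))=1$ if and only if there is a strictly increasing sequence $(n_k)$ with $\sum_k\mu(G_{n_k}^{n_{k+1},j})=\infty$ and, for every $1\le i<j$ and every strictly increasing sequence $(m_k)$, $\sum_k\mu(G_{m_k}^{m_{k+1},i})<\infty$.
   Context: A Bratteli diagram $B$ has levels $V_n$ ($V_0=\{v_0\}$, finite) and finite edge sets $E_n$ from $V_{n-1}$ to $V_n$ with source/range maps $s,r$; $X_B$ is its path space; aperiodic means every tail-equivalence class is infinite. Rank $d$: $\sup_n|V_n|<\infty$ and $d$ is the least integer with $|V_n|=d$ infinitely often. An ordering $\omega$ is a linear order on each $r^{-1}(v)$, $v\ne v_0$; $\mathcal O_B=\prod_{v\ne v_0}P_v$ with $\mu=\prod_v\mu_v$, $\mu_v$ uniform on the set $P_v$ of linear orders of $r^{-1}(v)$. $\mathcal O_B(j)$: orderings with exactly $j$ maximal infinite paths (paths all of whose edges are maximal). For $k<n$ and $1\le i\le d$, $G_k^{n,i}$ is the set of orderings $\omega$ such that the $\omega$-maximal finite paths from level $k$ to the vertices of $V_n$ (for each $v\in V_n$, the path from level $k$ to $v$ consisting of maximal edges) have exactly $i$ distinct sources in $V_k$. *)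

(* Defs.v *)
From HB Require Import structures.
From Stdlib Require Import List.
From mathcomp Require Import all_boot all_order all_algebra.
Unset Implicit Arguments. Unset Strict Implicit. Unset Printing Implicit Defensive.
Import Order.TTheory GRing.Theory Num.Theory.

(* The edge set
   between level n and level n+1 (the paper's E_(n+1)) is 'I_(ne n),
   with source map src n into level n and range map rng n into level n+1. *)
Record bratteli := Bratteli {
  nV : nat -> nat;
  ne : nat -> nat;
  src : forall n, 'I_(ne n) -> 'I_(nV n);
  rng : forall n, 'I_(ne n) -> 'I_(nV n.+1)
}.

Definition is_bratteli (B : bratteli) : Prop :=
  nV B 0 = 1%N /\
  (forall n (v : 'I_(nV B n)), exists e, src B n e = v) /\
  (forall n (v : 'I_(nV B n.+1)), exists e, rng B n e = v).

Definition pathT (B : bratteli) := forall n, 'I_(ne B n).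
Definition is_path (B : bratteli) (x : pathT B) : Prop :=
  forall n, rng B n (x n) = src B n.+1 (x n.+1).

Definition tail_equiv (B : bratteli) (x y : pathT B) : Prop :=
  exists N, forall n, (N <= n)%N -> x n = y n.

(* Aperiodic: every tail-equivalence class (of paths) is infinite:
   no finite list of paths exhausts it. *)
Definition aperiodic (B : bratteli) : Prop :=
  forall x : pathT B, is_path B x ->
  forall l : list (pathT B), exists y : pathT B,
    is_path B y /\ tail_equiv B x y /\ List.Forall (fun z => exists n, y n <> z n) l.

Definition is_rank (B : bratteli) (d : nat) : Prop :=
  (exists M, forall n, (nV B n <= M)%N) /\
  (forall N, exists n, (N <= n)%N /\ nV B n = d) /\
  (forall d', (d' < d)%N -> exists N, forall n, (N <= n)%N -> nV B n <> d').

(* The linear orders on r^{-1}(v) for all v in level n+1 are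
   encoded together as a function f : edges -> positions, whose restriction
   to each r^{-1}(v) is a bijection onto {0,..,|r^{-1}(v)|-1}. *)
Definition cnt (B : bratteli) n (v : 'I_(nV B n.+1)) : nat :=
  #|[set e : 'I_(ne B n) | rng B n e == v]|.

Definition Lvl (B : bratteli) n := {ffun 'I_(ne B n) -> 'I_(ne B n)}.

Definition valid_lvl (B : bratteli) n (f : Lvl B n) : bool :=
  [forall e, (f e < cnt B n (rng B n e))%N] &&
  [forall e1, forall e2,
     ((rng B n e1 == rng B n e2) && (f e1 == f e2)) ==> (e1 == e2)].

Definition LO (B : bratteli) n : {set Lvl B n} := [set f | valid_lvl B n f].

Definition OrdT (B : bratteli) := forall n, Lvl B n.
Definition valid_ord (B : bratteli) (w : OrdT B) : Prop := forall n, w n \in LO B n.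

Definition is_max_edge (B : bratteli) (w : OrdT B) n (e : 'I_(ne B n)) : bool :=
  nat_of_ord (w n e) == (cnt B n (rng B n e)).-1.

Definition is_max_path (B : bratteli) (w : OrdT B) (x : pathT B) : Prop :=
  is_path B x /\ forall n, is_max_edge B w n (x n).

Definition OBj (B : bratteli) (j : nat) (w : OrdT B) : Prop :=
  exists l : list (pathT B),
    List.length l = j /\
    List.Forall (is_max_path B w) l /\
    List.NoDup l /\
    (forall x, is_max_path B w x ->
       exists y, List.In y l /\ forall n, x n = y n) /\
    (forall y z, List.In y l -> List.In z l -> (forall n, y n = z n) -> y = z).

(* The product measure mu on O_B.
   Elementary cylinder: orderings agreeing with c on levels < N;
   its measure is prod_{m<N} [c m valid] / |LO m|. *)
Local Open Scope ring_scope.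

Definition cyl_meas (B : bratteli) (N : nat) (c : OrdT B) : rat :=
  \prod_(m < N) (if c m \in LO B m then (#|LO B m|%:R)^-1 else 0).

Definition in_cyl (B : bratteli) (N : nat) (c w : OrdT B) : Prop :=
  forall m, (m < N)%N -> w m = c m.

Definition mu_null (B : bratteli) (A : OrdT B -> Prop) : Prop :=
  forall eps : rat, 0 < eps ->
  exists (N : nat -> nat) (c : nat -> OrdT B),
    (forall w, A w -> exists i, in_cyl B (N i) (c i) w) /\
    (forall K, \sum_(i < K) cyl_meas B (N i) (c i) <= eps).

Definition mu_one (B : bratteli) (A : OrdT B -> Prop) : Prop :=
  mu_null B (fun w => valid_ord B w /\ ~ A w).

(* Finite-dimensional integration over the levels k, ..., k+d-1. *)
Definition upd (B : bratteli) (w : OrdT B) m (f : Lvl B m) : OrdT B :=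
  fun m' => match m =P m' with
            | ReflectT e => match e in _ = k return Lvl B k with erefl => f end
            | ReflectF _ => w m'
            end.

Fixpoint integ (B : bratteli) (F : OrdT B -> rat) (k d : nat) : OrdT B -> rat :=
  match d with
  | 0 => F
  | d'.+1 => fun w =>
      (\sum_(f in LO B (d' + k)) integ B F k d' (upd B w (d' + k) f)) / #|LO B (d' + k)|%:R
  end.

Definition ord0T (B : bratteli) : OrdT B := fun n => [ffun e => e].

(* maxreach w d k u v : the omega-maximal finite path ending at v in level
   d+k passes through u in level k. *)
Fixpoint maxreach (B : bratteli) (w : OrdT B) (d k : nat) :
    'I_(nV B k) -> 'I_(nV B (d + k)) -> bool :=
  match d return 'I_(nV B k) -> 'I_(nV B (d + k)) -> bool with
  | 0 => fun u v => u == v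
  | d'.+1 => fun u v =>
      [exists e : 'I_(ne B (d' + k)),
         [&& rng B _ e == v, is_max_edge B w _ e & maxreach B w d' k u (src B _ e)]]
  end.

Definition max_sources (B : bratteli) (w : OrdT B) (k d : nat) : {set 'I_(nV B k)} :=
  [set u | [exists v : 'I_(nV B (d + k)), maxreach B w d k u v]].

(* mu(G_k^{n,i}) with n = k + d: G depends only on levels k..n-1. *)
Definition muG_d (B : bratteli) (k d i : nat) : rat :=
  integ B (fun w => ((#|max_sources B w k d| == i) : nat)%:R) k d (ord0T B).

Definition muG (B : bratteli) (k n i : nat) : rat := muG_d B k (n - k) i.

Definition strictly_increasing (n : nat -> nat) : Prop := forall k, (n k < n k.+1)%N.

Definition series_diverges (a : nat -> rat) : Prop :=
  forall M : rat, exists K, M < \sum_(k < K) a k.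

Definition series_converges (a : nat -> rat) : Prop :=
  exists M : rat, forall K, \sum_(k < K) a k <= M.

(* Main.v *)
Require Import Defs.
From HB Require Import structures.
From Stdlib Require Import List.
From mathcomp Require Import all_boot all_order all_algebra.
From mathcomp Require Import ring lra zify.
From Stdlib Require Import Classical ClassicalEpsilon FunctionalExtensionality.
Unset Implicit Arguments. Unset Strict Implicit. Unset Printing Implicit Defensive.
Import Order.TTheory GRing.Theory Num.Theory.

Local Open Scope ring_scope.

Section Meas.
Variable B : bratteli.

Lemma upd_same (w : OrdT B) m f : upd B w m f m = f.
Proof. rewrite /upd; case: eqP => // e; by rewrite (eq_irrelevance e erefl). Qed.

Lemma upd_other (w : OrdT B) m f m' : m <> m' -> upd B w m f m' = w m'.
Proof. rewrite /upd; case: eqP => //. Qed.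

Definition dep (S : nat -> Prop) (F : OrdT B -> rat) :=
  forall w w', (forall m, S m -> w m = w' m) -> F w = F w'.

Lemma integS F k d w : integ B F k d.+1 w =
  (\sum_(f in LO B (d+k)) integ B F k d (upd B w (d+k) f)) / #|LO B (d+k)|%:R.
Proof. by []. Qed.

Lemma integ0 F k w : integ B F k 0 w = F w.
Proof. by []. Qed.

Lemma integ_ext F G k d w : (forall w, F w = G w) -> integ B F k d w = integ B G k d w.
Proof. by move=> h; have -> : F = G by apply: functional_extensionality. Qed.

Definition rk m (e : 'I_(ne B m)) : nat :=
  #|[set e' : 'I_(ne B m) | (rng B m e' == rng B m e) && (e' < e)%N]|.

Lemma rk_lt_cnt m e : (rk m e < cnt B m (rng B m e))%N.
Proof.
rewrite /rk /cnt; apply: proper_card; apply/properP; split.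
  by apply/subsetP=> x; rewrite !inE => /andP[->].
by exists e; rewrite !inE ?eqxx ?ltnn.
Qed.

Lemma cnt_le m v : (cnt B m v <= ne B m)%N.
Proof. by rewrite /cnt; apply: leq_trans (max_card _) _; rewrite card_ord. Qed.

Lemma rk_lt m e : (rk m e < ne B m)%N.
Proof. exact: leq_trans (rk_lt_cnt m e) (cnt_le _ _). Qed.

Definition lvl0 m : Lvl B m := [ffun e => Ordinal (rk_lt m e)].

Lemma lvl0_valid m : lvl0 m \in LO B m.
Proof.
rewrite inE /valid_lvl; apply/andP; split.
  by apply/forallP=> e; rewrite ffunE /= rk_lt_cnt.
apply/forallP=> e1; apply/forallP=> e2; apply/implyP=> /andP[/eqP r12].
rewrite !ffunE; move/eqP=> [] h.
have key: forall a b : 'I_(ne B m), rng B m a = rng B m b -> (a < b)%N -> (rk m a < rk m b)%N.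
  move=> a b rab ab; rewrite /rk; apply: proper_card; apply/properP; split.
    apply/subsetP=> x; rewrite !inE => /andP[/eqP -> xa].
    by rewrite rab eqxx /= (ltn_trans xa ab).
  by exists a; rewrite !inE ?rab ?eqxx ?ltnn.
case: (ltngtP e1 e2) => [lt|lt|eq]; last by apply/eqP/val_inj.
  by move: (key _ _ r12 lt); rewrite h ltnn.
by move: (key _ _ (esym r12) lt); rewrite h ltnn.
Qed.

Lemma LO_pos m : (0 < #|LO B m|)%N.
Proof. by apply/card_gt0P; exists (lvl0 m); exact: lvl0_valid. Qed.

Lemma LO_neq0 m : (#|LO B m|%:R : rat) != 0.
Proof. by rewrite pnatr_eq0 -lt0n LO_pos. Qed.

Lemma integ_pull (S : nat -> Prop) G F k d w :
  dep S G -> (forall m, S m -> ~ (k <= m < d + k)%N) ->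
  integ B (fun w => G w * F w) k d w = G w * integ B F k d w.
Proof.
move=> dG dis; elim: d w dis => [|d IH] w dis //.
rewrite !integS.
have dis' : forall m, S m -> ~ (k <= m < d + k)%N.
  move=> m Sm H; apply: (dis m Sm); move: H; rewrite addSn; lia.
transitivity ((\sum_(f in LO B (d + k)) G w * integ B F k d (upd B w (d + k) f)) /
   #|LO B (d + k)|%:R).
  congr (_ / _); apply: eq_bigr => f _; rewrite IH //; congr (_ * _).
  apply: dG => m Sm; rewrite upd_other // => E; apply: (dis m Sm); rewrite -E; lia.
by rewrite -big_distrr mulrA.
Qed.

Lemma integ_one k d w : integ B (fun _ => 1) k d w = 1.
Proof.
elim: d w => [|d IH] w //; rewrite integS.
under eq_bigr do rewrite IH.
by rewrite sumr_const -[_ *+ _]mulr_natl mulr1 divff // LO_neq0.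
Qed.

Lemma integ_indep (S : nat -> Prop) F k d w :
  dep S F -> (forall m, S m -> ~ (k <= m < d + k)%N) -> integ B F k d w = F w.
Proof.
move=> dF dis.
have := integ_pull S F (fun _ => 1) k d w dF dis.
rewrite integ_one mulr1 => <-; apply: integ_ext => ?; by rewrite mulr1.
Qed.

Lemma integ_cst c k d w : integ B (fun _ => c) k d w = c.
Proof. by apply: (integ_indep (fun _ => False)) => // ???. Qed.

Lemma integ_scale c F k d w : integ B (fun w => c * F w) k d w = c * integ B F k d w.
Proof. by apply: (integ_pull (fun _ => False) (fun _ => c)) => // ???. Qed.

Lemma integ_add F G k d w :
  integ B (fun w => F w + G w) k d w = integ B F k d w + integ B G k d w.
Proof.
elim: d w => [|d IH] w //; rewrite !integS.
under eq_bigr do rewrite IH.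
by rewrite big_split /= mulrDl.
Qed.


Lemma integ_sum (I : Type) (r : seq I) (F : I -> OrdT B -> rat) k d w :
  integ B (fun w => \sum_(i <- r) F i w) k d w = \sum_(i <- r) integ B (F i) k d w.
Proof.
elim: r => [|i r IH].
  rewrite big_nil -[RHS](integ_cst 0 k d w); apply: integ_ext => ?; by rewrite big_nil.
rewrite big_cons -IH -integ_add; apply: integ_ext => ?; by rewrite big_cons.
Qed.

Lemma integ_dep (S : nat -> Prop) F k d :
  dep S F -> dep (fun m => S m /\ ~ (k <= m < d + k)%N) (integ B F k d).
Proof.
move=> dF; elim: d => [|d IH] w w' h /=; first by apply: dF => m Sm; apply: h; split=> //; lia.
congr (_ / _); apply: eq_bigr => f _; apply: IH => m [Sm nm].
case: (eqVneq m (d + k)) => [->|ne]; first by rewrite !upd_same.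
rewrite !upd_other; try (by apply/eqP; rewrite eq_sym).
by apply: h; split=> //; rewrite addSn; move: ne => /eqP; lia.
Qed.

Definition vblock (w : OrdT B) k d := forall m, (k <= m < d + k)%N -> w m \in LO B m.
Definition agree_out (w w' : OrdT B) k d := forall m, ~ (k <= m < d + k)%N -> w m = w' m.

Lemma integ_le F G k d w :
  (forall w', vblock w' k d -> agree_out w w' k d -> F w' <= G w') ->
  integ B F k d w <= integ B G k d w.
Proof.
elim: d w => [|d IH] w h /=.
  by apply: h => m; [lia| ].
rewrite ler_pM2r ?invr_gt0 ?ltr0n ?LO_pos //.
apply: ler_sum => f fLO; apply: IH => w' vb ag; apply: h.
  move=> m hm; case: (eqVneq m (d + k)) => [->|ne].
    by rewrite -(ag (d+k)) ?upd_same //; lia.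
  by apply: vb; move: ne hm => /eqP; rewrite addSn; lia.
move=> m hm; rewrite -ag; last by rewrite addSn in hm; lia.
rewrite upd_other //; rewrite addSn in hm; lia.
Qed.

Lemma integ_split F k d1 d2 w :
  integ B F k (d1 + d2) w = integ B (integ B F k d1) (d1 + k) d2 w.
Proof.
elim: d2 w => [|d2 IH] w; first by rewrite addn0.
rewrite addnS integS [RHS]integS.
under eq_bigr do rewrite IH.
by rewrite (_ : d2 + (d1 + k) = d1 + d2 + k)%N; last lia.
Qed.

End Meas.

Local Open Scope ring_scope.

Lemma In_cat (T : Type) (x : T) (s1 s2 : seq T) :
  List.In x (s1 ++ s2) <-> List.In x s1 \/ List.In x s2.
Proof. elim: s1 => [|a s IH] /=; [tauto| rewrite IH; tauto]. Qed.

Lemma In_flatten (T : Type) (x : T) (ss : seq (seq T)) :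
  List.In x (flatten ss) <-> exists s, List.In s ss /\ List.In x s.
Proof.
elim: ss => [|s ss IH] /=; first by split=> // [[s []]].
rewrite In_cat IH; split.
  by case=> [h|[s' [h1 h2]]]; [exists s; auto | exists s'; auto].
by case=> s' [[<-|h1] h2]; [left | right; exists s'].
Qed.

Lemma In_map (T U : Type) (f : T -> U) y (s : seq T) :
  List.In y (map f s) <-> exists x, List.In x s /\ y = f x.
Proof.
elim: s => [|a s IH] /=; first by split=> // [[x []]].
rewrite IH; split.
  by case=> [<-|[x [h1 h2]]]; [exists a; auto | exists x; auto].
by case=> x [[<-|h1] ->]; [left | right; exists x].
Qed.

Lemma In_nth (T : Type) (x0 x : T) (s : seq T) :
  List.In x s -> exists q, (q < size s)%N /\ nth x0 s q = x.
Proof.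
elim: s => [|a s IH] //= [<-|h]; first by exists 0%N.
by have [q [h1 h2]] := IH h; exists q.+1.
Qed.

Lemma In_mem (T : eqType) (x : T) (s : seq T) : List.In x s <-> x \in s.
Proof. elim: s => [|a s IH] //=; rewrite inE IH; split; [case=> [->|->]; rewrite ?eqxx ?orbT // | case/orP=> [/eqP ->|]; auto]. Qed.

Section Cov.
Variable B : bratteli.

Definition w0 : OrdT B := ord0T B.

Definition valid_below (w : OrdT B) N := forall m, (m < N)%N -> w m \in LO B m.

Fixpoint cfgs (N : nat) (w : OrdT B) : seq (OrdT B) :=
  match N with
  | 0 => [:: w]
  | N'.+1 => flatten [seq cfgs N' (upd B w N' f) | f <- enum (LO B N')]
  end.

Definition pi N : rat := \prod_(m < N) (#|LO B m|%:R)^-1.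

Lemma integ_cfgs F N w : integ B F 0 N w = pi N * \sum_(c <- cfgs N w) F c.
Proof.
elim: N w => [|N IH] w; first by rewrite /pi big_ord0 big_seq1 mul1r.
rewrite integS addn0 /= big_flatten /= big_map big_enum /=.
under eq_bigr do rewrite IH.
rewrite -big_distrr /= /pi big_ord_recr /=; rewrite mulrC; lra.
Qed.

Lemma cfgs_prop N w c : List.In c (cfgs N w) ->
  valid_below c N /\ (forall m, (N <= m)%N -> c m = w m).
Proof.
elim: N w => [|N IH] w /=; first by case=> // <-; split=> // m; lia.
case/In_flatten=> s [/In_map [f [fin ->]] cin].
have [h1 h2] := IH _ cin.
have fLO : f \in LO B N by move: fin; rewrite In_mem mem_enum.
split.
  move=> m; rewrite ltnS leq_eqVlt => /orP[/eqP ->|]; last exact: h1.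
  by rewrite h2 // upd_same.
move=> m hm; rewrite h2 ?upd_other //; lia.
Qed.

Lemma cfgs_cover N w w' : valid_below w' N ->
  exists c, List.In c (cfgs N w) /\ forall m, (m < N)%N -> c m = w' m.
Proof.
elim: N w => [|N IH] w vw; first by exists w; split=> //=; auto.
have vw' : valid_below w' N by move=> m hm; apply: vw; lia.
have [c [cin cag]] := IH (upd B w N (w' N)) vw'.
exists c; split.
  apply/In_flatten; exists (cfgs N (upd B w N (w' N))); split=> //.
  apply/In_map; exists (w' N); split=> //; rewrite In_mem mem_enum; exact: vw.
move=> m; rewrite ltnS leq_eqVlt => /orP[/eqP ->|]; last exact: cag.
by have [_ ->] := cfgs_prop _ _ _ cin; rewrite ?upd_same.
Qed.

Lemma cyl_meas_valid N c : valid_below c N -> cyl_meas B N c = pi N.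
Proof. by move=> v; apply: eq_bigr => m _; rewrite v. Qed.

Lemma cyl_meas_ge0 N c : 0 <= cyl_meas B N c.
Proof. by apply: prodr_ge0 => m _; case: ifP => // _; rewrite invr_ge0 ler0n. Qed.

Lemma pi_ge0 N : 0 <= pi N.
Proof. by apply: prodr_ge0 => m _; rewrite invr_ge0 ler0n. Qed.


Lemma big_In_eq (T : Type) (s : seq T) (f g : T -> rat) :
  (forall x, List.In x s -> f x = g x) -> \sum_(x <- s) f x = \sum_(x <- s) g x.
Proof.
elim: s => [|a s IH] h; first by rewrite !big_nil.
by rewrite !big_cons h /=; auto; rewrite IH //= => x hx; apply: h; right.
Qed.

Lemma In_filter (T : Type) (p : pred T) x (s : seq T) :
  List.In x s -> p x -> List.In x (filter p s).
Proof. elim: s => [|a s IH] //= [<-|h] px; first by rewrite px; left.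
by case: (p a) => /=; auto. Qed.

Definition cyl := (nat * OrdT B)%type.
Definition cmeas (x : cyl) := cyl_meas B x.1 x.2.
Definition tot (s : seq cyl) := \sum_(x <- s) cmeas x.
Definition cov (A : OrdT B -> Prop) (e : rat) := exists L : nat -> seq cyl,
  (forall w, A w -> exists j x, List.In x (L j) /\ in_cyl B x.1 x.2 w) /\
  forall J, \sum_(0 <= j < J) tot (L j) <= e.

Lemma tot_ge0 s : 0 <= tot s.
Proof. by apply: sumr_ge0 => x _; apply: cyl_meas_ge0. Qed.

Lemma cov_sub (A A' : OrdT B -> Prop) e : (forall w, A w -> A' w) -> cov A' e -> cov A e.
Proof. move=> h [L [c s]]; exists L; split=> // w /h; exact: c. Qed.

Lemma cov_le (A : OrdT B -> Prop) e e' : e <= e' -> cov A e -> cov A e'.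
Proof. move=> h [L [c s]]; exists L; split=> // J; exact: le_trans (s J) h. Qed.

Lemma integ_ge0 F k d w : (forall w, 0 <= F w) -> 0 <= integ B F k d w.
Proof.
move=> h; rewrite -(integ_cst B 0 k d w); apply: integ_le => w' _ _; exact: h.
Qed.

Definition ind (b : bool) : rat := (b : nat)%:R.

Lemma cov_fin (E : OrdT B -> bool) N :
  (forall w w', (forall m, (m < N)%N -> w m = w' m) -> E w = E w') ->
  cov (fun w => valid_below w N /\ E w) (integ B (fun w => ind (E w)) 0 N w0).
Proof.
move=> dE.
exists (fun j => if j is 0 then [seq (N, c) | c <- cfgs N w0 & E c] else [::]); split.
  move=> w [vw Ew]; have [c [cin cag]] := cfgs_cover N w0 w vw.
  exists 0%N, (N, c); split.
    apply/In_map; exists c; split=> //; apply: In_filter => //.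
    by rewrite (dE c w).
  by move=> m hm /=; rewrite cag.
have tot0 : tot [seq (N, c) | c <- cfgs N w0 & E c] = integ B (fun w => ind (E w)) 0 N w0.
  rewrite integ_cfgs /tot big_map big_filter big_mkcond /= big_distrr /=.
  apply: big_In_eq => c cin; have [vc _] := cfgs_prop _ _ _ cin.
  by rewrite /ind; case: (E c); rewrite /cmeas /= ?cyl_meas_valid ?mulr1 ?mulr0.
case=> [|J]; first by rewrite big_geq // integ_ge0 // => w; rewrite /ind ler0n.
by rewrite big_nat_recl // tot0 big1_seq ?addr0 // => j _; rewrite /tot big_nil.
Qed.
End Cov.

Local Open Scope ring_scope.

Lemma choice_fun (A C : Type) (R : A -> C -> Prop) :
  (forall a, exists c, R a c) -> exists f : A -> C, forall a, R a (f a).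
Proof.
move=> h; exists (fun a => proj1_sig (constructive_indefinite_description _ (h a))).
move=> a; exact: proj2_sig (constructive_indefinite_description _ (h a)).
Qed.

Lemma diag_sum (a : nat -> nat -> rat) J :
  \sum_(0 <= n < J) \sum_(0 <= j < n.+1) a j (n - j)%N =
  \sum_(0 <= j < J) \sum_(0 <= t < J - j) a j t.
Proof.
elim: J => [|J IH]; first by rewrite !big_geq.
rewrite big_nat_recr //= IH.
rewrite [RHS]big_nat_recr //= subSnn big_nat1.
have -> : \sum_(0 <= j < J) \sum_(0 <= t < J.+1 - j) a j t =
   \sum_(0 <= j < J) (\sum_(0 <= t < J - j) a j t + a j (J - j)%N).
  apply: eq_big_nat => j /andP[_ hj]; rewrite subSn; last by lia.
  by rewrite big_nat_recr.
rewrite big_split /= -addrA; congr (_ + _).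
by rewrite big_nat_recr //= subnn.
Qed.

Section Cov2.
Variable B : bratteli.

Lemma cov_union (A : nat -> OrdT B -> Prop) (e : nat -> rat) e' :
  (forall j, cov B (A j) (e j)) -> (forall J, \sum_(0 <= j < J) e j <= e') ->
  cov B (fun w => exists j, A j w) e'.
Proof.
move=> hc he; have [L hL] := choice_fun _ _ _ hc.
exists (fun n => flatten [seq L j (n - j)%N | j <- iota 0 n.+1]); split.
  move=> w [j Aw]; have [t [x [xin xc]]] := (hL j).1 w Aw.
  exists (j + t)%N, x; split=> //; apply/In_flatten; exists (L j t); split=> //.
  apply/In_map; exists j; split; last by congr L; lia.
  rewrite In_mem mem_iota; lia.
move=> J.
have -> : \sum_(0 <= n < J) tot B (flatten [seq L j (n - j)%N | j <- iota 0 n.+1]) =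
   \sum_(0 <= n < J) \sum_(0 <= j < n.+1) tot B (L j (n - j)%N).
  by apply: eq_bigr => n _; rewrite /tot big_flatten big_map.
move: (diag_sum (fun j t => tot B (L j t)) J) => /= ->.
apply: le_trans (he J); apply: ler_sum => j _; exact: (hL j).2.
Qed.

Lemma geom_sum (eps : rat) J : 0 <= eps ->
  \sum_(0 <= j < J) eps / 2 ^+ j.+1 <= eps.
Proof.
move=> he.
suff: \sum_(0 <= j < J) eps / 2 ^+ j.+1 = eps - eps / 2 ^+ J.
  move=> ->; rewrite lerBlDr lerDl divr_ge0 // exprn_ge0 //.
elim: J => [|J IH]; first by rewrite big_geq // expr0 divr1 subrr.
rewrite big_nat_recr //= IH exprS; field.
by rewrite expf_neq0.
Qed.

Definition null (A : OrdT B -> Prop) := forall eps, 0 < eps -> cov B A eps.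

Lemma null_union (A : nat -> OrdT B -> Prop) :
  (forall j, null (A j)) -> null (fun w => exists j, A j w).
Proof.
move=> h eps ep; apply: (cov_union A (fun j => eps / 2 ^+ j.+1)).
  by move=> j; apply: h; rewrite divr_gt0 // exprn_gt0.
by move=> J; apply: geom_sum; rewrite ltW.
Qed.

Lemma null_sub (A A' : OrdT B -> Prop) : (forall w, A w -> A' w) -> null A' -> null A.
Proof. move=> h n eps ep; exact: cov_sub _ _ _ h (n eps ep). Qed.

Lemma null_or (A A' : OrdT B -> Prop) : null A -> null A' -> null (fun w => A w \/ A' w).
Proof.
move=> h1 h2; apply: (null_sub _ (fun w => exists j, if j is 0 then A w else A' w)).
  by move=> w [a|a]; [exists 0%N | exists 1%N].
by apply: null_union => -[|j].
Qed.

Section Flat.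
Variable x0 : cyl B.
Variable L : nat -> seq (cyl B).
Definition Sq K := flatten [seq x0 :: L j | j <- iota 0 K].

Lemma Sq_S K : Sq K.+1 = Sq K ++ (x0 :: L K).
Proof. by rewrite /Sq -addn1 iotaD map_cat flatten_cat /= cats0 add0n. Qed.

Lemma Sq_size K : (K <= size (Sq K))%N.
Proof. elim: K => [|K IH] //; rewrite Sq_S size_cat /=; lia. Qed.

Lemma Sq_prefix K K' : (K <= K')%N -> exists t, Sq K' = Sq K ++ t.
Proof.
move=> h; rewrite -(subnKC h); elim: (K' - K)%N => [|n [t IH]].
  by exists [::]; rewrite addn0 cats0.
by exists (t ++ x0 :: L (K + n)%N); rewrite addnS Sq_S IH catA.
Qed.

Lemma Sq_nth K K' q : (K <= K')%N -> (q < size (Sq K))%N ->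
  nth x0 (Sq K') q = nth x0 (Sq K) q.
Proof. by move=> h hq; have [t ->] := Sq_prefix K K' h; rewrite nth_cat hq. Qed.

Lemma Sq_tot K : tot B (Sq K) = \sum_(0 <= j < K) (cmeas B x0 + tot B (L j)).
Proof.
elim: K => [|K IH]; first by rewrite /tot /Sq /= big_nil big_geq.
by rewrite Sq_S /tot big_cat /= big_cons -/(tot B _) IH big_nat_recr.
Qed.
End Flat.

Lemma null_mu (A : OrdT B -> Prop) :
  (exists x0 : cyl B, cmeas B x0 = 0) -> null A -> mu_null B A.
Proof.
move=> [x0 hx0] hn eps ep; have [L [hc hs]] := hn eps ep.
pose c i := nth x0 (Sq x0 L i.+1) i.
exists (fun i => (c i).1), (fun i => (c i).2); split.
  move=> w Aw; have [j [x [xin xc]]] := hc w Aw.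
  have : List.In x (Sq x0 L j.+1).
    by rewrite Sq_S; apply/In_cat; right; right.
  case/(In_nth _ x0) => q [qs qx].
  exists q; rewrite /c.
  case: (leqP q.+1 j.+1) => h.
    rewrite -(Sq_nth x0 L q.+1 j.+1 q h) ?qx //.
    exact: (Sq_size x0 L q.+1).
  by rewrite (Sq_nth x0 L j.+1 q.+1 q) ?qx // ltnW.
move=> K.
have -> : \sum_(i < K) cyl_meas B (c i).1 (c i).2 =
    \sum_(0 <= i < K) cmeas B (nth x0 (Sq x0 L K) i).
  rewrite -(big_mkord xpredT (fun i => cyl_meas B (c i).1 (c i).2)).
  apply: eq_big_nat => i /andP[_ hi]; rewrite /c /cmeas.
  by rewrite (Sq_nth x0 L i.+1 K) // (leq_trans _ (Sq_size _ _ _)).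
apply: le_trans (_ : tot B (Sq x0 L K) <= eps).
  rewrite /tot (big_nth x0) (@big_cat_nat _ _ _ K 0 (size (Sq x0 L K))) ?Sq_size //=.
  by rewrite lerDl sumr_ge0 // => i _; apply: cyl_meas_ge0.
rewrite Sq_tot; under eq_bigr do rewrite hx0 add0r; exact: hs.
Qed.

End Cov2.

Local Open Scope ring_scope.

Lemma dchoice (A : Type) (C : A -> Type) (R : forall a, C a -> Prop) :
  (forall a, exists c, R a c) -> exists f : (forall a, C a), forall a, R a (f a).
Proof.
move=> h; exists (fun a => proj1_sig (constructive_indefinite_description _ (h a))).
move=> a; exact: proj2_sig (constructive_indefinite_description _ (h a)).
Qed.

Lemma sum_In_ge (T : Type) (s : seq T) (f : T -> rat) x :
  (forall y, 0 <= f y) -> List.In x s -> f x <= \sum_(y <- s) f y.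
Proof.
move=> h; elim: s => [|a s IH] //= [->|hx]; rewrite big_cons.
  by rewrite lerDl sumr_ge0.
by rewrite (le_trans (IH hx)) // lerDr.
Qed.

Section NotNull.
Variable B : bratteli.

Lemma null_of_mu (A : OrdT B -> Prop) : mu_null B A -> null B A.
Proof.
move=> h eps ep; have [N [c [hc hs]]] := h eps ep.
exists (fun j => [:: (N j, c j)]); split.
  move=> w Aw; have [i hi] := hc w Aw; exists i, (N i, c i); split=> //; by left.
move=> J; rewrite big_mkord; apply: le_trans (hs J); apply: ler_sum => i _.
by rewrite /tot big_seq1.
Qed.

Definition vtot (w : OrdT B) : OrdT B := fun m => if w m \in LO B m then w m else lvl0 B m.

Lemma vtot_valid w : valid_ord B (vtot w).
Proof. by move=> m; rewrite /vtot; case: ifP => // _; apply: lvl0_valid. Qed.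

Lemma vtot_eq w m : w m \in LO B m -> vtot w m = w m.
Proof. by rewrite /vtot => ->. Qed.

Lemma compact (P : nat -> OrdT B -> Prop) (lev : nat -> nat) :
  (forall i w w', (forall m, (m < lev i)%N -> w m = w' m) -> P i w -> P i w') ->
  (forall w, valid_ord B w -> exists i, P i w) ->
  exists K, forall w, valid_ord B w -> exists i, (i < K)%N /\ P i w.
Proof.
move=> hdep hcov; apply: NNPP => hK.
pose bad n (p : OrdT B) := forall K, exists w, valid_ord B w /\
  (forall m, (m < n)%N -> w m = p m) /\ forall i, (i < K)%N -> ~ P i w.
have bad0 : bad 0%N (w0 B).
  move=> K; apply: NNPP => h; apply: hK; exists K => w vw; apply: NNPP => h2; apply: h.
  exists w; split=> //; split=> // i hi hc; apply: h2; by exists i.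
have step : forall n p, bad n p -> exists f, f \in LO B n /\ bad n.+1 (upd B p n f).
  move=> n p bp; apply: NNPP => h.
  have h' : forall f : Lvl B n, exists K, f \in LO B n -> forall w, valid_ord B w ->
      (forall m, (m < n.+1)%N -> w m = upd B p n f m) ->
      exists i, (i < K)%N /\ P i w.
    move=> f; case: (boolP (f \in LO B n)) => fl; last by exists 0%N.
    apply: NNPP => hf; apply: h; exists f; split=> // K.
    apply: NNPP => hK2; apply: hf; exists K => _ w vw ag; apply: NNPP => hh; apply: hK2.
    exists w; split=> //; split=> // i hi hc; apply: hh; by exists i.
  have [Kf hKf] := choice_fun _ _ _ h'.
  have [w [vw [ag nc]]] := bp (\max_(f in LO B n) Kf f).
  have := hKf (w n) (vw n) w vw.
  case.
    move=> m; rewrite ltnS leq_eqVlt => /orP[/eqP ->|hm]; first by rewrite upd_same.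
    by rewrite upd_other ?ag //; lia.
  move=> i [hi ci]; apply: (nc i _ ci).
  by apply: leq_trans hi _; apply: (leq_bigmax_cond _ (vw n)).
have hex : forall np : nat * OrdT B, exists f : Lvl B np.1,
    bad np.1 np.2 -> f \in LO B np.1 /\ bad np.1.+1 (upd B np.2 np.1 f).
  move=> [n p] /=; case: (classic (bad n p)) => b; first by have [f hf] := step n p b; exists f.
  by exists (lvl0 B n).
have [st hst] := dchoice (nat * OrdT B) (fun np => Lvl B np.1) _ hex.
pose fix pr n := if n is n'.+1 then upd B (pr n') n' (st (n', pr n')) else w0 B.
have bpr : forall n, bad n (pr n).
  elim=> [|n IH] //=; exact: (hst (n, pr n) IH).2.
pose w m := pr m.+1 m.
have prw : forall n m, (m < n)%N -> pr n m = w m.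
  elim=> [|n IH] m hm //; rewrite /= /w.
  case: (eqVneq m n) => [->|ne]; first by rewrite /=.
  rewrite upd_other; last by apply/eqP; rewrite eq_sym.
  by rewrite IH //; move: ne => /eqP; lia.
have vw : valid_ord B w.
  move=> m; rewrite /w /= upd_same; exact: (hst (m, pr m) (bpr m)).1.
have [i ci] := hcov w vw.
have [w' [vw' [ag nc]]] := bpr (lev i) i.+1.
apply: (nc i (ltnSn i)); apply: (hdep i w) ci => m hm; rewrite ag // prw //.
Qed.

Definition cylind N (c w : OrdT B) : rat := \prod_(m < N) ind (w m == c m).

Lemma cylind_in N c w : in_cyl B N c w -> cylind N c w = 1.
Proof. by move=> h; apply: big1 => m _; rewrite h // eqxx. Qed.

Lemma cylind_ge0 N c w : 0 <= cylind N c w.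
Proof. by apply: prodr_ge0 => m _; rewrite /ind ler0n. Qed.

Lemma sum_ind_eq (n : nat) (c : Lvl B n) :
  \sum_(f in LO B n) ind (f == c) = ind (c \in LO B n).
Proof.
rewrite big_mkcond (bigD1 c) //= eqxx big1 ?addr0.
  by rewrite /ind; case: (c \in LO B n).
by move=> f fc; rewrite (negbTE fc); case: (f \in LO B n).
Qed.

Lemma dep_weak (S S' : nat -> Prop) F : (forall m, S m -> S' m) -> dep B S F -> dep B S' F.
Proof. by move=> h dF w w' ag; apply: dF => m /h; apply: ag. Qed.

Lemma cylind_dep N c : dep B (fun m => (m < N)%N) (cylind N c).
Proof. by move=> w w' ag; apply: eq_bigr => m _; rewrite ag. Qed.

Lemma integ_cylind N c w :
  integ B (cylind N c) 0 N w = cyl_meas B N c.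
Proof.
elim: N w => [|N IH] w; first by rewrite /= /cylind /cyl_meas !big_ord0.
have := integ_split B (cylind N.+1 c) 0 N 1 w; rewrite addn1 addn0 => ->.
have e1 : forall w', integ B (cylind N.+1 c) 0 N w' = ind (w' N == c N) * cyl_meas B N c.
  move=> w'; rewrite -(IH w') -(integ_pull B (fun m => m = N) (fun u => ind (u N == c N)) (cylind N c) 0 N w'); first last.
  - by move=> m -> ; lia.
  - by move=> u u' ag; rewrite ag.
  by apply: integ_ext => u; rewrite /cylind big_ord_recr /= mulrC.
rewrite (integ_ext B _ (fun w' => cyl_meas B N c * ind (w' N == c N))); last first.
  by move=> u; rewrite e1 mulrC.
rewrite integ_scale /= add0n.
under eq_bigr do rewrite upd_same.
rewrite sum_ind_eq /cyl_meas big_ord_recr /=; congr (_ * _).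
by rewrite /ind; case: (c N \in LO B N); rewrite ?mul1r ?mul0r.
Qed.

Lemma integ_lift F N M w : (N <= M)%N -> dep B (fun m => (m < N)%N) F ->
  integ B F 0 M w = integ B F 0 N w.
Proof.
move=> hNM dF; rewrite -(subnKC hNM) integ_split.
apply: (integ_indep B (fun _ => False)) => //.
apply: (dep_weak _ _ _ _ (integ_dep B _ F 0 N dF)) => m [hm h]; apply: h; lia.
Qed.

Lemma not_null_valid : ~ null B (fun w => valid_ord B w).
Proof.
move=> hn; have [L [hc hs]] := hn (1/2) (ltac:(by [])).
pose lev j := \max_(x <- L j) x.1.
have levP : forall j x, List.In x (L j) -> (x.1 <= lev j)%N.
  move=> j x; rewrite /lev; elim: (L j) => [|y s IH] //= [<-|h].
    by rewrite big_cons leq_maxl.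
  by rewrite big_cons (leq_trans (IH h)) // leq_maxr.
pose P j w := exists x, List.In x (L j) /\ in_cyl B x.1 x.2 w.
have H1 : forall i w w', (forall m, (m < lev i)%N -> w m = w' m) -> P i w -> P i w'.
  move=> j u u' ag [x [xin xc]]; exists x; split=> // m hm.
  by rewrite -ag ?xc //; apply: leq_trans hm (levP _ _ xin).
have H2 : forall w, valid_ord B w -> exists i, P i w.
  move=> u vu; have [j [x hx]] := hc u vu; by exists j, x.
have [J hJ] := compact P lev H1 H2.
pose M := \max_(j < J) lev j.
have levM : forall j, (j < J)%N -> (lev j <= M)%N.
  by move=> j hj; rewrite /M; apply: (leq_bigmax (Ordinal hj)).
have key : 1 <= \sum_(0 <= j < J) \sum_(x <- L j) integ B (cylind x.1 x.2) 0 M (w0 B).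
  rewrite -(integ_cst B 1 0 M (w0 B)).
  under eq_bigr do rewrite -integ_sum.
  rewrite -integ_sum; apply: integ_le => u vu _.
  have vu' : valid_ord B (fun m => if (m < M)%N then u m else vtot u m).
    move=> m; case: ifP => hm; first by apply: vu; lia.
    apply: vtot_valid.
  have [j [hj [x [xin xc]]]] := hJ _ vu'.
  have -> : 1 = cylind x.1 x.2 u.
    apply/esym/cylind_in => m hm; rewrite -xc //; case: ifP => // hm2.
    by move: hm2; rewrite (leq_trans hm (leq_trans (levP _ _ xin) (levM _ hj))).
  apply: le_trans (sum_In_ge _ (index_iota 0 J) (fun j => \sum_(y <- L j) cylind y.1 y.2 u) j _ _).
    apply: sum_In_ge xin => y; exact: cylind_ge0.
    by move=> y; apply: sumr_ge0 => *; apply: cylind_ge0.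
  by rewrite In_mem mem_index_iota.
suff H : \sum_(0 <= j < J) \sum_(x <- L j) integ B (cylind x.1 x.2) 0 M (w0 B) <= 1/2.
  by have := le_trans key H; lra.
apply: le_trans (hs J); apply: ler_sum_nat => j hj; rewrite /tot.
rewrite le_eqVlt; apply/orP; left; apply/eqP/big_In_eq => x xin.
rewrite (integ_lift _ x.1) ?integ_cylind //; last exact: cylind_dep.

apply: leq_trans (levP _ _ xin) (levM _ _); lia.
Qed.

End NotNull.

Local Close Scope ring_scope.
Set Bullet Behavior "None".

Section Comb.
Variable B : bratteli.
Hypothesis HB : is_bratteli B.

Lemma nV_pos n : (0 < nV B n)%N.
Proof.
elim: n => [|n IH]; first by rewrite (proj1 HB).
have [e _] := (proj1 (proj2 HB)) n (Ordinal IH).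
by apply: (leq_ltn_trans _ (ltn_ord (rng B n e))).
Qed.

Variable w : OrdT B.

Lemma max_unique n (e1 e2 : 'I_(ne B n)) : w n \in LO B n ->
  is_max_edge B w n e1 -> is_max_edge B w n e2 -> rng B n e1 = rng B n e2 -> e1 = e2.
Proof.
rewrite inE /valid_lvl => /andP[_ /forallP h] m1 m2 r12.
have := (forallP (h e1)) e2; move/implyP => H; apply/eqP; apply: H; rewrite r12 eqxx /=.
move: m1 m2; rewrite /is_max_edge r12 => /eqP m1 /eqP m2; apply/eqP/val_inj => /=.
by rewrite m1 m2.
Qed.

Lemma max_exists n (v : 'I_(nV B n.+1)) : w n \in LO B n ->
  exists e, rng B n e = v /\ is_max_edge B w n e.
Proof.
move=> vl; have vl' := vl; rewrite inE /valid_lvl in vl'; case/andP: vl' => /forallP hlt /forallP hinj.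
pose Fv := [set e : 'I_(ne B n) | rng B n e == v].
have hcn : (cnt B n v <= ne B n)%N := cnt_le B n v.
pose S := [set widen_ord hcn i | i : 'I_(cnt B n v)].
have cS : #|S| = cnt B n v by rewrite card_imset ?card_ord //; by move=> a b /(congr1 val) /= h; apply: val_inj.
have inj : {in Fv &, injective (fun e => w n e)}.
  move=> a b; rewrite !inE => /eqP ra /eqP rb hab.
  have := (forallP (hinj a)) b; move/implyP => H; apply/eqP; apply: H.
  by rewrite ra rb hab !eqxx.
have sub : (fun e => w n e) @: Fv \subset S.
  apply/subsetP=> o /imsetP [e]; rewrite inE => /eqP re ->.
  have lt : (w n e < cnt B n v)%N by rewrite -re; exact: hlt.
  by apply/imsetP; exists (Ordinal lt) => //; apply: val_inj.
have eqS : (fun e => w n e) @: Fv = S.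
  by apply/eqP; rewrite eqEcard sub cS card_in_imset //= /cnt.
have cpos : (0 < cnt B n v)%N.
  have [e re] := (proj2 (proj2 HB)) n v.
  by rewrite /cnt; apply/card_gt0P; exists e; rewrite inE re.
have hp : ((cnt B n v).-1 < cnt B n v)%N by rewrite ltn_predL.
have : widen_ord hcn (Ordinal hp) \in S by apply/imsetP; exists (Ordinal hp).
rewrite -eqS => /imsetP [e]; rewrite inE => /eqP re he.
by exists e; split=> //; rewrite /is_max_edge re -he /=.
Qed.

Definition mxe n (v : nat) : option 'I_(ne B n) :=
  [pick e | (val (rng B n e) == v) && is_max_edge B w n e].

Definition dn1 n (v : nat) : nat := if mxe n v is Some e then val (src B n e) else 0%N.

Fixpoint downN (k t : nat) (v : nat) : nat :=
  if t is t'.+1 then downN k t' (dn1 (t' + k) v) else v.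

Lemma dn1_max n (e : 'I_(ne B n)) : w n \in LO B n -> is_max_edge B w n e ->
  dn1 n (val (rng B n e)) = val (src B n e).
Proof.
move=> vl me; rewrite /dn1 /mxe; case: pickP => [e' /andP[/eqP r me']|/(_ e)].
  by rewrite (max_unique n e' e) //; apply: val_inj.
by rewrite eqxx me.
Qed.

Lemma dn1_edge n (v : 'I_(nV B n.+1)) : w n \in LO B n ->
  exists e, rng B n e = v /\ is_max_edge B w n e /\ val (src B n e) = dn1 n (val v).
Proof.
move=> vl; have [e [re me]] := max_exists n v vl.
by exists e; split=> //; split=> //; rewrite -re dn1_max.
Qed.

Lemma dn1_range n v : w n \in LO B n -> (v < nV B n.+1)%N -> (dn1 n v < nV B n)%N.
Proof.
move=> vl hv; have [e [_ [_ <-]]] := dn1_edge n (Ordinal hv) vl; exact: ltn_ord.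
Qed.

Definition vblk k t := forall m, (k <= m < t + k)%N -> w m \in LO B m.

Lemma downN_range k t v : vblk k t -> (v < nV B (t + k))%N -> (downN k t v < nV B k)%N.
Proof.
elim: t v => [|t IH] v vb hv //=; apply: IH.
  by move=> m hm; apply: vb; lia.
by apply: dn1_range => //; apply: vb; lia.
Qed.

Lemma downN_comp k t s v : downN k (t + s) v = downN k t (downN (t + k) s v).
Proof.
elim: s v => [|s IH] v; first by rewrite addn0.
by rewrite addnS /= IH (_ : (s + (t + k)) = (t + s + k))%N //; lia.
Qed.

Lemma maxreach_downN t k (u : 'I_(nV B k)) (v : 'I_(nV B (t + k))) : vblk k t ->
  maxreach B w t k u v = (val u == downN k t (val v)).
Proof.
elim: t v => [|t IH] v vb //=.
have vt : w (t + k) \in LO B (t + k) by apply: vb; lia.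
have vb' : vblk k t by move=> m hm; apply: vb; lia.
apply/existsP/eqP.
  case=> e /and3P[/eqP re me mr]; rewrite IH // in mr; rewrite (eqP mr).
  by rewrite -re dn1_max.
move=> hu; have [e [re [me se]]] := dn1_edge (t + k) v vt.
exists e; rewrite re eqxx me /= IH // se; exact/eqP.
Qed.

End Comb.

Local Close Scope ring_scope.
Set Bullet Behavior "None".

Section Paths.
Variable B : bratteli.
Hypothesis HB : is_bratteli B.
Variable w : OrdT B.

Definition inSrc k t u := exists v, (v < nV B (t + k))%N /\ u = downN B w k t v.

Definition Srcs k t : {set 'I_(nV B k)} :=
  [set u | [exists v : 'I_(nV B (t + k)), val u == downN B w k t (val v)]].

Lemma Srcs_inSrc k t (u : 'I_(nV B k)) : (u \in Srcs k t) <-> inSrc k t (val u).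
Proof.
rewrite inE; split.
  by case/existsP=> v /eqP ->; exists (val v); split=> //; exact: ltn_ord.
by case=> v [hv ->]; apply/existsP; exists (Ordinal hv).
Qed.

Lemma max_sources_Srcs k t : vblk B w k t -> max_sources B w k t = Srcs k t.
Proof.
move=> vb; apply/setP => u; rewrite !inE; apply: eq_existsb => v.
exact: maxreach_downN.
Qed.

Lemma inSrc_mono k t s u : vblk B w k (t + s) -> inSrc k (t + s) u -> inSrc k t u.
Proof.
move=> vb [v [hv ->]]; rewrite downN_comp.
exists (downN B w (t + k) s v); split=> //.
apply: (downN_range B HB).
  by move=> m hm; apply: vb; lia.
by rewrite (_ : s + (t + k) = t + s + k)%N //; lia.
Qed.

Lemma Srcs_mono k t s : vblk B w k (t + s) -> Srcs k (t + s) \subset Srcs k t.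
Proof.
move=> vb; apply/subsetP => u /Srcs_inSrc h; apply/Srcs_inSrc; exact: inSrc_mono vb h.
Qed.

Hypothesis vw : valid_ord B w.

Lemma vblk_all k t : vblk B w k t.
Proof. by move=> m _; apply: vw. Qed.

Definition ismp (x : pathT B) := is_max_path B w x.

Lemma mp_src x n : ismp x -> val (src B n (x n)) = dn1 B w n (val (src B n.+1 (x n.+1))).
Proof. by case=> hp hm; rewrite -hp dn1_max. Qed.

Lemma mp_down x k t : ismp x -> val (src B k (x k)) = downN B w k t (val (src B (t + k) (x (t + k)))).
Proof.
move=> mx; elim: t => [|t IH] //=.
by rewrite IH (mp_src x (t + k)).
Qed.

Lemma mp_inSrc x k t : ismp x -> inSrc k t (val (src B k (x k))).
Proof.
move=> mx; exists (val (src B (t + k) (x (t + k)))); split; first exact: ltn_ord.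
exact: mp_down.
Qed.

Lemma mp_step x y m : ismp x -> ismp y ->
  src B m.+1 (x m.+1) = src B m.+1 (y m.+1) -> x m = y m.
Proof.
move=> [hx mx] [hy my] e; apply: (max_unique B w m) => //.
by rewrite hx hy e.
Qed.

Lemma mp_down_eq x y n : ismp x -> ismp y -> x n = y n -> forall m, (m <= n)%N -> x m = y m.
Proof.
move=> mx my e m hm.
have gen : forall d m, x (m + d)%N = y (m + d)%N -> x m = y m.
  elim=> [|d IH] m'; first by rewrite addn0.
  move=> h; apply: IH; apply: (mp_step x y) => //.
  by rewrite -addnS h.
apply: (gen (n - m)%N); by rewrite subnKC.
Qed.

Definition allSrc k u := forall t, inSrc k t u.

Lemma allSrc_range k u : allSrc k u -> (u < nV B k)%N.
Proof.
move=> h; have [v [hv ->]] := h 0%N; exact: hv.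
Qed.

Lemma koenig_step n x : allSrc n x -> exists y, allSrc n.+1 y /\ dn1 B w n y = x.
Proof.
move=> hx; apply: NNPP => hno.
have h1 : forall y : 'I_(nV B n.+1), exists T, dn1 B w n y = x -> ~ inSrc n.+1 T y.
  move=> y; case: (boolP (dn1 B w n y == x)) => [/eqP e|ne]; last by exists 0%N => /eqP; rewrite (negbTE ne).
  apply: NNPP => hh; apply: hno; exists y; split=> // T; apply: NNPP => hT; apply: hh.
  by exists T.
have [Ty hTy] := choice_fun _ _ _ h1.
pose T := \max_(y < nV B n.+1) Ty y.
have [v [hv hxv]] := hx T.+1.
have : x = dn1 B w n (downN B w n.+1 T v).
  by rewrite hxv -(add1n T) downN_comp /= add1n.
move=> ex.
have yr : (downN B w n.+1 T v < nV B n.+1)%N.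
  apply: (downN_range B HB) => //.
  by rewrite addnS -addSn.
pose y := Ordinal yr.
apply: (hTy y (esym ex)).
have hle : (Ty y <= T)%N by apply: (leq_bigmax y).
apply: (inSrc_mono n.+1 (Ty y) (T - Ty y)%N); first exact: vblk_all.
by rewrite subnKC //; exists v; split=> //; rewrite addnS -addSn.
Qed.



Lemma koenig k u : allSrc k u -> exists x, ismp x /\ val (src B k (x k)) = u.
Proof.
move=> hu.
have hex : forall p : nat * nat, exists y, allSrc p.1 p.2 -> allSrc p.1.+1 y /\ dn1 B w p.1 y = p.2.
  move=> [n z] /=; case: (classic (allSrc n z)) => h; last by exists 0%N.
  have [y hy] := koenig_step n z h; by exists y.
have [st hst] := choice_fun _ _ _ hex.
pose fix ub j := if j is j'.+1 then st (j' + k, ub j')%N else u.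
have ubA : forall j, allSrc (j + k) (ub j).
  elim=> [|j IH] //=; exact: (hst (j + k, ub j)%N IH).1.
pose U n := if (n <= k)%N then downN B w n (k - n) u else ub (n - k)%N.
have Ur : forall n, (U n < nV B n)%N.
  move=> n; rewrite /U; case: ifP => hn.
    apply: (downN_range B HB); first exact: vblk_all.
    by rewrite subnK //; exact: allSrc_range hu.
  have := allSrc_range _ _ (ubA (n - k)%N); rewrite subnK //; lia.
have Uc : forall n, dn1 B w n (U n.+1) = U n.
  move=> n; rewrite /U; case: (ltngtP n k) => hnk.
  - have -> : (k - n = 1 + (k - n.+1))%N by lia.
    by rewrite downN_comp /= add1n.
  - have -> : (n.+1 - k = (n - k).+1)%N by lia.
    have := (hst (n - k + k, ub (n - k))%N (ubA (n - k)%N)).2.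
    by rewrite /= subnK // ltnW.
  - rewrite hnk subSnn subnn /=.
    by have := (hst (0 + k, u)%N hu).2; rewrite /= add0n.
have hedge : forall n, exists e : 'I_(ne B n), rng B n e = Ordinal (Ur n.+1) /\ is_max_edge B w n e.
  move=> n; apply: max_exists => //; exact: vw.
have [x hx] := dchoice nat (fun n => 'I_(ne B n)) _ hedge.
have srcx : forall n, val (src B n (x n)) = U n.
  move=> n; have [re me] := hx n.
  by rewrite -(dn1_max B w n (x n)) ?re //=; exact: vw.
exists x; split.
  split; last by move=> n; exact: (hx n).2.
  move=> n; apply: val_inj; rewrite srcx; by have [-> _] := hx n.
rewrite srcx /U leqnn subnn //.
Qed.

Lemma mp_exists : exists x, ismp x.
Proof.
have h : allSrc 0 0.
  move=> t; have ht : (0 < nV B (t + 0))%N by rewrite addn0; apply: nV_pos.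
  exists 0%N; split=> //.
  have := downN_range B HB w 0 t 0 (vblk_all 0 t) ht.
  by rewrite (proj1 HB); case: (downN B w 0 t 0%N).
by have [x [hx _]] := koenig 0 0 h; exists x.
Qed.

End Paths.

Local Close Scope ring_scope.
Set Bullet Behavior "None".

Lemma mem_map_In (T : Type) (U : eqType) (f : T -> U) v l :
  v \in map f l -> exists x, In x l /\ v = f x.
Proof.
elim: l => [|a l IH] //=; rewrite inE => /orP[/eqP ->|h]; first by exists a; auto.
by have [x [h1 h2]] := IH h; exists x; auto.
Qed.

Lemma In_map_mem (T : Type) (U : eqType) (f : T -> U) x l : In x l -> f x \in map f l.
Proof. elim: l => [|a l IH] //= [->|h]; rewrite inE ?eqxx // IH ?orbT //. Qed.

Lemma size_length (T : Type) (l : seq T) : size l = length l.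
Proof. by elim: l => //= a l ->. Qed.

Lemma argmin_nat (c : nat -> nat) : exists t0, forall t, (c t0 <= c t)%N.
Proof.
suff : forall n, (exists t, (c t <= n)%N) -> exists t0, forall t, (c t0 <= c t)%N.
  by apply; exists 0%N.
elim=> [|n IH] [t ht].
  by exists t => t'; move: ht; rewrite leqn0 => /eqP ->.
case: (classic (exists t, (c t <= n)%N)) => h; first exact: IH.
exists t => t'; apply: leq_trans ht _; rewrite leqNgt; apply/negP => h'.
by apply: h; exists t'.
Qed.

Section Count.
Variable B : bratteli.
Hypothesis HB : is_bratteli B.
Variable w : OrdT B.
Hypothesis vw : valid_ord B w.

Lemma path_ext (x y : pathT B) : (forall n, x n = y n) -> x = y.
Proof. move=> h; exact: functional_extensionality_dep. Qed.

Lemma separate x y : ismp B w x -> ismp B w y -> x <> y ->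
  exists L, forall k, (L <= k)%N -> src B k (x k) <> src B k (y k).
Proof.
move=> mx my nxy.
have [n hn] : exists n, x n <> y n.
  apply: NNPP => h; apply: nxy; apply: path_ext => n; apply: NNPP => h2; apply: h; by exists n.
exists n.+1 => k hk e.
have e' : x k.-1 = y k.-1 by apply: (mp_step B w vw) => //; rewrite prednK //; lia.
apply: hn; apply: (mp_down_eq B w vw x y k.-1) => //; lia.
Qed.

Lemma separate_list x l : ismp B w x -> Forall (ismp B w) l -> ~ In x l ->
  exists L, forall k, (L <= k)%N -> forall y, In y l -> src B k (x k) <> src B k (y k).
Proof.
move=> mx; elim: l => [|y l IH] hl hn; first by exists 0%N.
inversion hl; subst.
have [L1 h1] := separate x y mx H1 (fun e => hn (or_introl (esym e))).
have [L2 h2] := IH H2 (fun h => hn (or_intror h)).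
exists (maxn L1 L2) => k hk z [<-|hz].
  by apply: h1; apply: leq_trans hk; apply: leq_maxl.
by apply: h2 => //; apply: leq_trans hk; apply: leq_maxr.
Qed.

Lemma uniq_srcs l : NoDup l -> Forall (ismp B w) l ->
  exists L, forall k, (L <= k)%N -> uniq (map (fun p : pathT B => src B k (p k)) l).
Proof.
elim: l => [|x l IH] hnd hl; first by exists 0%N.
inversion hnd; inversion hl; subst.
have [L1 h1] := separate_list x l H5 H6 H1.
have [L2 h2] := IH H2 H6.
exists (maxn L1 L2) => k hk /=; apply/andP; split; last first.
  by apply: h2; apply: leq_trans hk; apply: leq_maxr.
apply/negP => /mem_map_In [y [yin e]].
by apply: (h1 k) e; first by apply: leq_trans hk; apply: leq_maxl.
Qed.

Lemma many_card l : NoDup l -> Forall (ismp B w) l ->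
  exists L, forall k t, (L <= k)%N -> (length l <= #|Srcs B w k t|)%N.
Proof.
move=> hnd hl; have [L hL] := uniq_srcs l hnd hl.
exists L => k t hk.
rewrite -size_length cardE -(size_map (fun p : pathT B => src B k (p k))).
apply: uniq_leq_size; first exact: hL.
move=> u /mem_map_In [p [pin ->]]; rewrite mem_enum.
apply/Srcs_inSrc; apply: mp_inSrc => //.
by move: hl; rewrite Forall_forall; apply.
Qed.

Lemma cover_card l : (forall x, ismp B w x -> exists y, In y l /\ forall n, x n = y n) ->
  forall k, exists t, (#|Srcs B w k t| <= length l)%N.
Proof.
move=> hc k; apply: NNPP => hno.
have big : forall t, (length l < #|Srcs B w k t|)%N.
  by move=> t; rewrite ltnNge; apply/negP => h; apply: hno; exists t.
have [t0 minP] := argmin_nat (fun t => #|Srcs B w k t|).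
have ht0 : #|Srcs B w k t0| = #|Srcs B w k t0| by [].
have sub : forall t, Srcs B w k t0 \subset Srcs B w k t.
  move=> t; case: (leqP t t0) => htt.
    by rewrite -(subnKC htt); apply: (Srcs_mono B HB w); exact: (vblk_all B w vw).
  have s1 : Srcs B w k t \subset Srcs B w k t0.
    by rewrite -(subnKC (ltnW htt)); apply: (Srcs_mono B HB w); exact: (vblk_all B w vw).
  have : Srcs B w k t == Srcs B w k t0 by rewrite eqEcard s1 minP.
  by move/eqP ->.
have hU : forall u, u \in Srcs B w k t0 -> u \in map (fun p : pathT B => src B k (p k)) l.
  move=> u hu.
  have hall : allSrc B w k (val u).
    by move=> t; apply/Srcs_inSrc; apply: (subsetP (sub t)).
  have [x [mx xu]] := koenig B HB w vw k (val u) hall.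
  have [y [yin ey]] := hc x mx.
  have -> : u = src B k (y k) by apply: val_inj; rewrite -ey xu.
  exact: In_map_mem.
have := big t0.
have : (#|Srcs B w k t0| <= length l)%N.
  rewrite -size_length -(size_map (fun p : pathT B => src B k (p k))).
  apply: leq_trans (card_size _).
  by apply: subset_leq_card; apply/subsetP => u /hU.
lia.
Qed.


Definition Many r := exists l, NoDup l /\ length l = r /\ Forall (ismp B w) l.

Lemma obj_many i : OBj B i w -> ~ Many i.+1.
Proof.
move=> [l [hlen [hF [hnd [hc _]]]]] [l' [hnd' [hlen' hF']]].
have inc : incl l' l.
  move=> y yin; have my : ismp B w y by move: hF'; rewrite Forall_forall; apply.
  have [z [zin ez]] := hc y my; by rewrite (path_ext y z ez).
have := NoDup_incl_length hnd' inc; rewrite hlen hlen'; lia.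
Qed.

Lemma obj_pos : ~ OBj B 0 w.
Proof.
move=> [l [hlen [_ [_ [hc _]]]]]; have [x mx] := mp_exists B HB w vw.
have [y [yin _]] := hc x mx; by destruct l.
Qed.

Lemma sub_list (P : pathT B -> Prop) l n : NoDup l -> Forall P l -> (n <= length l)%N ->
  exists l', NoDup l' /\ length l' = n /\ Forall P l' /\ incl l' l.
Proof.
elim: l n => [|a l IH] n hnd hF h.
  by move: h; rewrite leqn0 => /eqP ->; exists [::]; split; [constructor|split=> //; split=> //].
inversion hnd; inversion hF; subst.
case: n h => [|n] h; first by exists [::]; split; [constructor|split=> //; split=> //].
have [l' [h1 [h2 [h3 h4]]]] := IH n H2 H6 h.
exists (a :: l'); split; last first.
  split; first by rewrite /= h2.
  split; first by constructor.
  by move=> y /= [<-|hy]; [left|right; apply: h4].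
by constructor=> // hin; apply: H1; apply: h4.
Qed.

Lemma many_down r r' : (r' <= r)%N -> Many r -> Many r'.
Proof.
move=> h [l [hnd [hlen hF]]]; subst r.
have [l' [h1 [h2 [h3 _]]]] := sub_list _ l r' hnd hF h.
by exists l'.
Qed.

Lemma bounded_max (P : nat -> Prop) j : (exists r, P r) -> (forall r, P r -> (r <= j)%N) ->
  exists r, P r /\ forall r', P r' -> (r' <= r)%N.
Proof.
elim: j => [|j IH] [r hr] hb.
  by exists r; split=> // r' /hb; have := hb r hr; lia.
case: (classic (P j.+1)) => h; first by exists j.+1; split.
apply: IH; first by exists r.
move=> r' hr'; have := hb r' hr'; rewrite leq_eqVlt => /orP[/eqP e|//].
by subst r'.
Qed.

Lemma classify j : ~ OBj B j w -> Many j.+1 \/ exists i, (1 <= i < j)%N /\ OBj B i w.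
Proof.
move=> hno; case: (classic (Many j.+1)) => hm; first by left.
right.
have [r [[l [hnd [hlen hF]]] hmax]] :
    exists r, Many r /\ forall r', Many r' -> (r' <= r)%N.
  apply: (bounded_max _ j); first by exists 0%N, [::]; split; [constructor|split].
  move=> r hr; rewrite leqNgt; apply/negP => hlt; apply: hm.
  exact: many_down hlt hr.
have cov : forall x, ismp B w x -> exists y, In y l /\ forall n, x n = y n.
  move=> x mx; case: (classic (In x l)) => hx; first by exists x.
  have : Many r.+1.
    exists (x :: l); split; first by constructor.
    by split; [rewrite /= hlen | constructor].
  by move/hmax; lia.
have hobj : OBj B r w.
  exists l; split=> //; split=> //; split=> //; split=> //.
  by move=> y z _ _ h; apply: path_ext.
have r1 : (1 <= r)%N.
  have [x mx] := mp_exists B HB w vw.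
  apply: (hmax 1%N); exists [:: x]; split; first by constructor; [|constructor].
  by split; [|constructor].
exists r; split=> //; apply/andP; split=> //.
have rj : (r <= j)%N.
  rewrite leqNgt; apply/negP => hlt; apply: hm.
  apply: many_down hlt _; by exists l.
rewrite ltn_neqAle rj andbT; apply/eqP => e; subst; exact: hno.
Qed.

End Count.

Local Open Scope ring_scope.
Set Bullet Behavior "None".

Section BC.
Variable B : bratteli.

Lemma maxreach_dep (w w' : OrdT B) t k u v :
  (forall m, (k <= m < t + k)%N -> w m = w' m) -> maxreach B w t k u v = maxreach B w' t k u v.
Proof.
elim: t v => [|t IH] v h //=.
apply: eq_existsb => e; rewrite /is_max_edge h; last by lia.
by rewrite IH // => m hm; apply: h; lia.
Qed.

Lemma msrc_dep k (F : {set 'I_(nV B k)} -> rat) t :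
  dep B (fun m => (k <= m < t + k)%N) (fun w => F (max_sources B w k t)).
Proof.
move=> w w' h; congr F; apply/setP => u; rewrite !inE; apply: eq_existsb => v.
exact: maxreach_dep.
Qed.

Lemma integ_block F k M M' w w' : (M <= M')%N ->
  dep B (fun m => (k <= m < M + k)%N) F -> integ B F k M' w = integ B F k M w'.
Proof.
move=> hM dF.
have dI : dep B (fun _ => False) (integ B F k M).
  apply: (dep_weak B _ (fun _ => False) _ _ (integ_dep B _ F k M dF)) => m [hm h]; by apply: h.
rewrite -(subnKC hM) integ_split (integ_indep B (fun _ => False) _ _ _ _ dI) //.
by apply: dI.
Qed.

Lemma integ_shift F k M w w' : dep B (fun m => (k <= m < M + k)%N) F ->
  integ B F 0 (k + M) w = integ B F k M w'.
Proof.
move=> dF; rewrite integ_split.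
rewrite (integ_ext B _ F); last first.
  move=> u; apply: (integ_indep B (fun m => (k <= m < M + k)%N)) => // m hm; lia.
rewrite addn0; apply: integ_block => //.
Qed.

Lemma integ_01 F k d w : (forall w, 0 <= F w <= 1) -> 0 <= integ B F k d w <= 1.
Proof.
move=> h; apply/andP; split.
  rewrite -(integ_cst B 0 k d w); apply: integ_le => u _ _; by case/andP: (h u).
rewrite -(integ_cst B 1 k d w); apply: integ_le => u _ _; by case/andP: (h u).
Qed.

Lemma ind01 b : 0 <= ind b <= 1.
Proof. by case: b; rewrite /ind /= ?ler01 ?lexx. Qed.

Lemma prod_le (p : nat -> rat) K L : (forall k, 0 <= p k <= 1) ->
  \prod_(K <= k < L) (1 - p k) <= 1 / (1 + \sum_(K <= k < L) p k).
Proof.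
move=> hp; elim: L => [|L IH].
  by rewrite !big_geq // addr0 divr1.
case: (leqP K L) => hKL; last first.
  by rewrite !big_geq // addr0 divr1.
rewrite !big_nat_recr //=.
set P := \prod_(K <= k < L) (1 - p k) in IH *.
set S := \sum_(K <= k < L) p k in IH *.
have S0 : 0 <= S by apply: sumr_ge0 => k _; case/andP: (hp k).
have [p0 p1] : 0 <= p L /\ p L <= 1 by case/andP: (hp L).
have P0 : 0 <= P by apply: prodr_ge0 => k _; case/andP: (hp k) => _ h; lra.
apply: le_trans (_ : (1 / (1 + S)) * (1 - p L) <= _).
  by apply: ler_wpM2r => //; lra.
have e : 1 / (1 + (S + p L)) - 1 / (1 + S) * (1 - p L) =
    (p L * S + p L * p L) / ((1 + S) * (1 + (S + p L))).
  by field; apply/andP; split; apply/eqP; lra.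
have : 0 <= (p L * S + p L * p L) / ((1 + S) * (1 + (S + p L))).
  apply: divr_ge0; [nra | apply: mulr_ge0; lra].
rewrite -e; lra.
Qed.


Section BC2.
Variable m : nat -> nat.
Variable i : nat.
Hypothesis mi : strictly_increasing m.

Definition gB k (w : OrdT B) : rat := ind (#|max_sources B w (m k) (m k.+1 - m k)| == i).

Lemma gB_dep k : dep B (fun x => (m k <= x < (m k.+1 - m k) + m k)%N) (gB k).
Proof. exact: (msrc_dep (m k) (fun s => ind (#|s| == i))). Qed.

Lemma integ_gB k w : integ B (gB k) (m k) (m k.+1 - m k) w = muG B (m k) (m k.+1) i.
Proof. by rewrite /muG /muG_d; apply: integ_block => //; exact: gB_dep. Qed.

Lemma m_le a b : (a <= b)%N -> (m a <= m b)%N.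
Proof.
move=> h; rewrite -(subnKC h); elim: (b - a)%N => [|n IH]; first by rewrite addn0.
by rewrite addnS (leq_trans IH) // ltnW // mi.
Qed.

Lemma m_ge k : (k <= m k)%N.
Proof. elim: k => [|k IH] //; apply: leq_ltn_trans IH (mi k). Qed.

Lemma prod_integ K n w :
  integ B (fun w => \prod_(K <= k < K + n) (1 - gB k w)) 0 (m (K + n)) w =
  \prod_(K <= k < K + n) (1 - muG B (m k) (m k.+1) i).
Proof.
elim: n w => [|n IH] w.
  rewrite addn0 big_geq // (integ_ext B _ (fun _ => 1)) ?integ_one // => u.
  by rewrite big_geq.
set L := (K + n)%N in IH *.
rewrite addnS -/L.
have hL : (m L <= m L.+1)%N by apply: ltnW; apply: mi.
have := integ_split B (fun w => \prod_(K <= k < L.+1) (1 - gB k w)) 0 (m L) (m L.+1 - m L) w.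
rewrite subnKC // => ->.
rewrite (integ_ext B _ (fun w' => \prod_(K <= k < L) (1 - muG B (m k) (m k.+1) i) * 1 +
    (- \prod_(K <= k < L) (1 - muG B (m k) (m k.+1) i)) * gB L w')); last first.
  move=> u.
  rewrite (integ_ext B _ (fun w' => (1 - gB L w') * \prod_(K <= k < L) (1 - gB k w'))); last first.
    by move=> v; rewrite big_nat_recr ?leq_addr //= mulrC.
  rewrite (integ_pull B (fun x => (m L <= x < (m L.+1 - m L) + m L)%N)).
  - rewrite IH; ring.
  - by move=> v v' h; rewrite (gB_dep L v v' h).
  - move=> x hx; lia.
rewrite integ_add integ_scale integ_one integ_scale addn0 integ_gB.
rewrite big_nat_recr ?leq_addr //=; ring.
Qed.

Lemma ind_all (w : OrdT B) (s : seq nat) :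
  ind (all (fun k => gB k w == 0) s) = \prod_(k <- s) (1 - gB k w).
Proof.
elim: s => [|a s IH]; first by rewrite big_nil.
rewrite big_cons /= -IH /gB /ind.
by case: (#|_| == i); case: (all _ _); rewrite /= ?subrr ?subr0 ?mul1r ?mul0r ?oner_eq0.
Qed.

Lemma muG01 k : 0 <= muG B (m k) (m k.+1) i <= 1.
Proof. apply: integ_01 => u; exact: ind01. Qed.

Hypothesis HB : is_bratteli B.

Lemma bc : series_diverges (fun k => muG B (m k) (m k.+1) i) ->
  null B (fun w => valid_ord B w /\ Many B w i.+1).
Proof.
move=> hdiv.
pose E K (w : OrdT B) := valid_ord B w /\ forall k, (K <= k)%N -> gB k w = 0.
apply: (null_sub B _ (fun w => exists K, E K w)).
  move=> w [vw [l [hnd [hlen hF]]]].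
  have [L hL] := many_card B w vw l hnd hF.
  exists L; split=> // k hk; rewrite /gB (max_sources_Srcs B HB w); last exact: (vblk_all B w vw).
  have := hL (m k) (m k.+1 - m k)%N (leq_trans hk (m_ge k)).
  by rewrite hlen /ind; case: eqP => // ->; rewrite ltnn.
apply: (null_union B E) => K eps ep.
pose p k := muG B (m k) (m k.+1) i.
have [K' hK'] := hdiv (\sum_(k < K) p k + eps^-1).
rewrite -!(big_mkord xpredT) in hK'.
rewrite -(big_mkord xpredT (fun k => muG B (m k) (m k.+1) i)) in hK'.
have {}hK' : \sum_(0 <= k < K) p k + eps^-1 < \sum_(0 <= k < K') p k by exact: hK'.
have p0 : forall k, 0 <= p k by move=> k; case/andP: (muG01 k).
have KK : (K <= K')%N.
  rewrite leqNgt; apply/negP => h.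
  move: hK'; rewrite (@big_cat_nat _ _ _ K' 0 K _ _ (leq0n K') (ltnW h)) /=.
  have : 0 <= \sum_(K' <= k < K) p k by apply: sumr_ge0.
  have : 0 < eps^-1 by rewrite invr_gt0.
  lra.
have Ssum : eps^-1 < \sum_(K <= k < K') p k.
  move: hK'; rewrite (@big_cat_nat _ _ _ K 0 K' _ _ (leq0n K) KK) /=; lra.
pose Eb (w : OrdT B) := all (fun k => gB k w == 0) (index_iota K K').
have hdE : forall w w', (forall x, (x < m K')%N -> w x = w' x) -> Eb w = Eb w'.
  move=> w w' ag; apply: eq_in_all => k; rewrite mem_index_iota => /andP[_ hk].
  rewrite (gB_dep k w w') // => x hx; apply: ag.
  apply: leq_trans (m_le k.+1 K' hk); lia.
have hc := cov_fin B Eb (m K') hdE.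
apply: (cov_sub B _ _ _ _ (cov_le B _ _ _ _ hc)).
  move=> w [vw hE]; split; first by move=> x _; apply: vw.
  apply/allP => k; rewrite mem_index_iota => /andP[hk _]; apply/eqP; exact: hE k hk.
rewrite (integ_ext B _ (fun w => \prod_(K <= k < K + (K' - K)) (1 - gB k w))); last first.
  by move=> u; rewrite subnKC // ind_all.
have := prod_integ K (K' - K)%N (w0 B); rewrite subnKC // => ->.
apply: le_trans (prod_le p K K' _) _; first by move=> k; exact: muG01.
set S := \sum_(K <= k < K') p k in Ssum *.
have S0 : 0 <= S by apply: sumr_ge0.
rewrite ler_pdivrMr; last lra.
have : eps * eps^-1 < eps * S by rewrite ltr_pM2l.
rewrite divff ?gt_eqF //; nra.
Qed.

End BC2.
End BC.

Local Open Scope ring_scope.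
Set Bullet Behavior "None".

Lemma archi_nat (x : rat) : exists n : nat, x < n%:R.
Proof.
case: (lerP 0 x) => hx; first by exists (Num.Def.archi_bound x); apply: archi_boundP.
by exists 0%N; rewrite (lt_le_trans hx).
Qed.

Lemma cauchy_dec (h : nat -> rat) N : (forall M, (N <= M)%N -> 0 <= h M) ->
  (forall M M', (N <= M <= M')%N -> h M' <= h M) ->
  forall eta, 0 < eta -> exists M0, (N <= M0)%N /\ forall M, (M0 <= M)%N -> h M0 <= h M + eta.
Proof.
move=> h0 hdec eta he; apply: NNPP => hno.
have st : forall M0, exists M, (N <= M0)%N -> (M0 <= M)%N /\ h M + eta < h M0.
  move=> M0; case: (boolP (N <= M0)%N) => hM0; last by exists 0%N.
  apply: NNPP => hh; apply: hno; exists M0; split=> // M hM.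
  rewrite leNgt; apply/negP => hlt; apply: hh; exists M => _; split=> //.
have [nx hnx] := choice_fun _ _ _ st.
pose fix q j := if j is j'.+1 then nx (q j') else N.
have qN : forall j, (N <= q j)%N.
  elim=> [|j IH] //=; exact: leq_trans IH (hnx _ IH).1.
have qv : forall j, h (q j) + j%:R * eta <= h N.
  elim=> [|j IH]; first by rewrite /= mul0r addr0.
  have [_ hlt] := hnx _ (qN j); rewrite /= -/(q j) in hlt *.
  rewrite -natr1 mulrDl mul1r; lra.
have [n hn] := archi_nat (h N / eta).
have := qv n; have := h0 _ (qN n).
rewrite ltr_pdivrMr // in hn; lra.
Qed.

Section F3.
Variable B : bratteli.
Hypothesis HB : is_bratteli B.
Variable i : nat.

Definition sz (k : nat) (w : OrdT B) t := #|max_sources B w k t|.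

Definition Dt k t (w : OrdT B) : bool :=
  (sz k w t == i) && [forall t' : 'I_t, sz k w t' != i].

Lemma sum_Dt k w J : \sum_(0 <= t < J) ind (Dt k t w) = ind [exists t : 'I_J, sz k w t == i].
Proof.
elim: J => [|J IH].
  rewrite big_geq //; apply/esym; rewrite /ind; case: existsP => // -[[t ht] _] //.
rewrite big_nat_recr //= IH /Dt.
case: existsP => [[t ht]|hn].
  have -> : [exists t0 : 'I_J.+1, sz k w t0 == i].
    by apply/existsP; exists (widen_ord (leqnSn J) t).
  have -> : [forall t' : 'I_J, sz k w t' != i] = false.
    by apply/negbTE/forallPn; exists t; rewrite negbK.
  by rewrite andbF /ind /= addr0.
have -> : [forall t' : 'I_J, sz k w t' != i].
  by apply/forallP => t; apply/negP => h; apply: hn; exists t.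
rewrite andbT /ind /= add0r; congr (nat_of_bool _)%:R.
apply/idP/existsP => [h|[[t ht] /eqP e]]; first by exists ord_max.
have et : t = J.
  apply/eqP; rewrite eqn_leq -ltnS ht /= leqNgt; apply/negP => h.
  by apply: hn; exists (Ordinal h); rewrite /= e.
by apply/eqP; rewrite -e /= et.
Qed.

Lemma sum_Dt_le1 k w J : \sum_(0 <= t < J) ind (Dt k t w) <= 1.
Proof. by rewrite sum_Dt; exact: (proj2 (andP (ind01 _))). Qed.


Lemma sz_eq k (w w' : OrdT B) M t : (forall x, (k <= x < M + k)%N -> w x = w' x) ->
  (t <= M)%N -> sz k w t = sz k w' t.
Proof.
move=> ag htM; rewrite /sz (_ : max_sources B w k t = max_sources B w' k t) //.
apply/setP => u; rewrite !inE.
apply: eq_existsb => v; apply: maxreach_dep => x hx; apply: ag; lia.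
Qed.

Lemma sz_mono k (w : OrdT B) t t' : vblk B w k t' -> (t <= t')%N -> (sz k w t' <= sz k w t)%N.
Proof.
move=> vb htt; have vb' : vblk B w k t by move=> x hx; apply: vb; lia.
rewrite /sz !(max_sources_Srcs B HB w) //; apply: subset_leq_card.
rewrite -(subnKC htt); apply: (Srcs_mono B HB w); by rewrite subnKC.
Qed.

Definition Ev k t M (w : OrdT B) := Dt k t w && (sz k w M == i).

Lemma Ev_dep k t M : (t <= M)%N -> dep B (fun x => (k <= x < M + k)%N) (fun w => ind (Ev k t M w)).
Proof.
move=> htM w w' ag; rewrite /Ev /Dt (sz_eq k w w' M M) // (sz_eq k w w' M t) //.
rewrite (_ : [forall t' : 'I_t, sz k w t' != i] = [forall t' : 'I_t, sz k w' t' != i]) //.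
apply: eq_forallb => t'.
by rewrite (sz_eq k w w' M t') //; apply: leq_trans (ltnW (ltn_ord t')) htM.
Qed.

Definition Hm k t M := integ B (fun w => ind (Ev k t M w)) k M (w0 B).
Definition am k M := muG B k (k + M) i.

Lemma am_eq k M : am k M = integ B (fun w => ind (sz k w M == i)) k M (w0 B).
Proof. by rewrite /am /muG addKn. Qed.

Lemma Hm_ge0 k t M : 0 <= Hm k t M.
Proof. apply: integ_ge0 => u; exact: (proj1 (andP (ind01 _))). Qed.

Lemma Hm_sum k J M : \sum_(0 <= t < J) Hm k t M <= am k M.
Proof.
rewrite am_eq /Hm -integ_sum; apply: integ_le => u _ _.
rewrite /Ev; case: (sz k u M == i); last first.
  by rewrite big1 // => t _; rewrite andbF.
under eq_bigr do rewrite andbT; exact: sum_Dt_le1.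
Qed.

Lemma Hm_dec k t M M' : (t <= M <= M')%N -> Hm k t M' <= Hm k t M.
Proof.
case/andP=> h1 h2; rewrite /Hm -(integ_block B (fun w => ind (Ev k t M w)) k M M' (w0 B) (w0 B)) //; last first.
  exact: Ev_dep.
apply: integ_le => u vu _; rewrite /Ev /ind.
case: (Dt k t u) /andP => [[/eqP e1 _]|] //=; case: eqP => //= e2.
have := sz_mono k u M M' vu h2; have := sz_mono k u t M _ h1.
rewrite e1 e2 => h3 h4.
have h5 : (sz k u M <= i)%N by apply: h3 => x hx; apply: vu; lia.
by rewrite (_ : sz k u M == i) //; rewrite eqn_leq h4 h5.
Qed.



Lemma ind_inj b b' : ind b = ind b' -> b = b'.
Proof. by case: b; case: b' => //; rewrite /ind /= => /eqP; rewrite ?oner_eq0 // eq_sym oner_eq0. Qed.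

Definition Zs k (w : OrdT B) := valid_ord B w /\ (forall t, (i <= sz k w t)%N) /\ (exists t, (sz k w t <= i)%N).

Lemma cov_Z k (del : rat) : 0 < del -> (forall M, (1 <= M)%N -> am k M <= del) ->
  cov B (Zs k) (del + del).
Proof.
move=> dp ha.
have hM : forall t, exists M0, (maxn t 1 <= M0)%N /\
    forall M, (M0 <= M)%N -> Hm k t M0 <= Hm k t M + del / 2 ^+ t.+1.
  move=> t; apply: cauchy_dec.
  - by move=> M _; apply: Hm_ge0.
  - move=> M M' /andP[h1 h2]; apply: Hm_dec; rewrite h2 andbT.
    by apply: leq_trans h1; apply: leq_maxl.
  - by rewrite divr_gt0 // exprn_gt0.
have [Mt hMt] := choice_fun _ _ _ hM.
have Mtt : forall t, (t <= Mt t)%N by move=> t; apply: leq_trans (hMt t).1; apply: leq_maxl.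
apply: (cov_sub B _ (fun w => exists t, valid_below B w (k + Mt t) /\ Ev k t (Mt t) w)).
  move=> w [vw [hlow [t1 ht1]]].
  have hex : exists t, (sz k w t <= i)%N by exists t1.
  case: (ex_minnP hex) => t0 h0 hmin.
  exists t0; split; first by move=> x _; apply: vw.
  have e0 : sz k w t0 = i by apply/eqP; rewrite eqn_leq h0 hlow.
  rewrite /Ev /Dt e0 eqxx /=; apply/andP; split.
    apply/forallP => t'; apply/negP => /eqP e.
    have := hmin t'; rewrite e leqnn => /(_ isT); rewrite leqNgt ltn_ord.
    by [].
  rewrite eqn_leq hlow andbT.
  apply: leq_trans (sz_mono k w t0 (Mt t0) (vblk_all B w vw k _) (Mtt t0)) _; by rewrite e0.
apply: (cov_union B _ (fun t => integ B (fun w => ind (Ev k t (Mt t) w)) 0 (k + Mt t) (w0 B))).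
  move=> t; apply: cov_fin => w w' ag; apply: ind_inj.
  apply: (Ev_dep k t (Mt t) (Mtt t)) => x hx; apply: ag; lia.
move=> J.
have e : forall t, integ B (fun w => ind (Ev k t (Mt t) w)) 0 (k + Mt t) (w0 B) = Hm k t (Mt t).
  move=> t; apply: integ_shift; exact: Ev_dep.
under eq_bigr do rewrite e.
case: J => [|J]; first by rewrite big_geq //; lra.
pose Ms := maxn J.+1 (\max_(t < J.+1) Mt t).
have hMs : forall t, (t < J.+1)%N -> (Mt t <= Ms)%N.
  move=> t ht; apply: leq_trans (leq_maxr _ _); exact: (leq_bigmax (Ordinal ht)).
apply: le_trans (_ : \sum_(0 <= t < J.+1) (Hm k t Ms + del / 2 ^+ t.+1) <= _).
  by apply: ler_sum_nat => t /andP[_ ht]; apply: (hMt t).2; apply: hMs.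
rewrite big_split /=.
have := Hm_sum k J.+1 Ms; have := geom_sum del J.+1 (ltW dp).
have := ha Ms (leq_trans (ltn0Sn J) (leq_maxl _ _)).
lra.
Qed.


Lemma good_k : (forall m, strictly_increasing m -> series_converges (fun k => muG B (m k) (m k.+1) i)) ->
  forall del, 0 < del -> forall L, exists k, (L <= k)%N /\ forall M, (1 <= M)%N -> am k M <= del.
Proof.
move=> hconv del dp L; apply: NNPP => hno.
have hT : forall k, exists M, (L <= k)%N -> (1 <= M)%N /\ del < am k M.
  move=> k; case: (boolP (L <= k)%N) => hk; last by exists 0%N.
  apply: NNPP => hh; apply: hno; exists k; split=> // M hM.
  rewrite leNgt; apply/negP => hlt; apply: hh; by exists M.
have [T hTT] := choice_fun _ _ _ hT.
pose fix m j := if j is j'.+1 then (m j' + T (m j'))%N else L.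
have mL : forall j, (L <= m j)%N.
  elim=> [|j IH] //=; exact: leq_trans IH (leq_addr _ _).
have msi : strictly_increasing m.
  move=> j /=; have := (hTT (m j) (mL j)).1; lia.
have [Mb hMb] := hconv m msi.
have hge : forall K, K%:R * del <= \sum_(k < K) muG B (m k) (m k.+1) i.
  move=> K; have -> : K%:R * del = \sum_(k < K) del by rewrite sumr_const card_ord mulr_natl.
  apply: ler_sum => j _; exact: ltW (hTT (m j) (mL j)).2.
have [K hK] := archi_nat (Mb / del).
have := hge K; have := hMb K; rewrite ltr_pdivrMr // in hK; lra.
Qed.

Lemma f3 : (forall m, strictly_increasing m -> series_converges (fun k => muG B (m k) (m k.+1) i)) ->
  null B (fun w => valid_ord B w /\ OBj B i w).
Proof.
move=> hconv eps ep.
have hk : forall L, exists k, (L <= k)%N /\ forall M, (1 <= M)%N -> am k M <= eps / 2 ^+ L.+2.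
  move=> L; apply: good_k => //; by rewrite divr_gt0 // exprn_gt0.
have [kL hkL] := choice_fun _ _ _ hk.
apply: (cov_sub B _ (fun w => exists L, Zs (kL L) w)).
  move=> w [vw [l [hlen [hF [hnd [hc _]]]]]].
  have [L0 hL0] := many_card B w vw l hnd hF.
  exists L0; split=> //; split.
    move=> t; rewrite /sz (max_sources_Srcs B HB w) ?(vblk_all B w vw) // -hlen.
    by apply: hL0; exact: (hkL L0).1.
  have [t ht] := cover_card B HB w vw l hc (kL L0).
  by exists t; rewrite /sz (max_sources_Srcs B HB w) ?(vblk_all B w vw) // -hlen.
apply: (cov_union B _ (fun L => eps / 2 ^+ L.+1)).
  move=> L; apply: cov_le (cov_Z (kL L) (eps / 2 ^+ L.+2) _ (hkL L).2).
    rewrite le_eqVlt; apply/orP; left; apply/eqP; rewrite [2 ^+ L.+2]exprS; field.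
    by rewrite expf_neq0.
  by rewrite divr_gt0 // exprn_gt0.
move=> J; apply: geom_sum; exact: ltW.
Qed.

End F3.


Local Open Scope ring_scope.
Set Bullet Behavior "None".

Section Final.
Variable B : bratteli.
Hypothesis HB : is_bratteli B.
Hypothesis HA : aperiodic B.

Lemma zero_cyl : exists x0 : cyl B, cmeas B x0 = 0.
Proof.
have [x [px _]] := mp_exists B HB (vtot B (w0 B)) (vtot_valid B _).
have [y [py [_ hF]]] := HA x px [:: x].
have [n hn] : exists n, y n <> x n by inversion hF.
have h2 : (1 < ne B n)%N.
  case: (ltnP 1 (ne B n)) => // h; exfalso; apply: hn; apply: val_inj => /=.
  have h1 := ltn_ord (y n); have h3 := ltn_ord (x n).
  have : nat_of_ord (y n) = 0%N by lia.
  have : nat_of_ord (x n) = 0%N by lia.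
  by move=> -> ->.
pose f : Lvl B n := [ffun _ => Ordinal h2].
have fnot : f \notin LO B n.
  apply/negP; rewrite inE /valid_lvl => /andP[/forallP hlt /forallP hinj].
  have := hlt (x n); rewrite ffunE /= => hc.
  case/card_gt1P: hc => e1 [e2 [e1in e2in ne12]].
  rewrite !inE in e1in e2in.
  have := (forallP (hinj e1)) e2; rewrite (eqP e1in) (eqP e2in) eqxx !ffunE eqxx /=.
  by rewrite (negbTE ne12).
exists (n.+1, upd B (w0 B) n f); rewrite /cmeas /cyl_meas /= big_ord_recr /=.
by rewrite upd_same (negbTE fnot) mulr0.
Qed.

Lemma mu_one_null (A : OrdT B -> Prop) : mu_one B A <-> null B (fun w => valid_ord B w /\ ~ A w).
Proof.
split; first exact: null_of_mu.
by move=> h; apply: null_mu => //; exact: zero_cyl.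
Qed.

Lemma not_both (A : OrdT B -> Prop) :
  null B (fun w => valid_ord B w /\ A w) -> null B (fun w => valid_ord B w /\ ~ A w) -> False.
Proof.
move=> h1 h2; apply: (not_null_valid B).
apply: (null_sub B _ _ _ (null_or B _ _ h1 h2)) => w vw.
by case: (classic (A w)) => h; [left|right].
Qed.

Lemma ndiv_conv (a : nat -> rat) : ~ series_diverges a -> series_converges a.
Proof.
move=> h; apply: NNPP => h2; apply: h => M; apply: NNPP => h3; apply: h2.
exists M => K; rewrite leNgt; apply/negP => h4; apply: h3; by exists K.
Qed.

Lemma nconv_div (a : nat -> rat) : ~ series_converges a -> series_diverges a.
Proof.
move=> h M; apply: NNPP => h3; apply: h.
exists M => K; rewrite leNgt; apply/negP => h4; apply: h3; by exists K.
Qed.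

Lemma obj_many2 w j i : OBj B j w -> (i <= j)%N -> Many B w i.
Proof.
move=> [l [hlen [hF [hnd _]]]] hij; apply: (many_down B w j) => //.
by exists l.
Qed.

End Final.

Theorem mainTheorem18 (B : bratteli) (d : nat) :
  is_bratteli B -> aperiodic B -> is_rank B d ->
  (mu_one B (OBj B 1) <->
     exists n : nat -> nat, strictly_increasing n /\
       series_diverges (fun k => muG B (n k) (n k.+1) 1)) /\
  (forall j : nat, (1 < j <= d)%N ->
     (mu_one B (OBj B j) <->
        (exists n : nat -> nat, strictly_increasing n /\
           series_diverges (fun k => muG B (n k) (n k.+1) j)) /\
        (forall i : nat, (1 <= i < j)%N ->
           forall m : nat -> nat, strictly_increasing m ->
             series_converges (fun k => muG B (m k) (m k.+1) i)))).
Proof.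
move=> HB HA _; split.
  rewrite mu_one_null //; split.
    move=> hn; apply: NNPP => hno.
    have hc : forall m, strictly_increasing m -> series_converges (fun k => muG B (m k) (m k.+1) 1).
      move=> m hm; apply: ndiv_conv => hd; apply: hno; by exists m.
    exact: (not_both B (OBj B 1) (f3 B HB 1%N hc) hn).
  move=> [n [hn hd]].
  apply: (null_sub B _ _ _ (bc B n 1%N hn HB hd)) => w [vw hno].
  split=> //; case: (classify B HB w vw 1%N hno) => // -[i [hi _]].
  by move: hi; case: i.
move=> j /andP[hj _]; rewrite mu_one_null //; split.
  move=> hn; split.
    apply: NNPP => hno.
    have hc : forall m, strictly_increasing m -> series_converges (fun k => muG B (m k) (m k.+1) j).
      move=> m hm; apply: ndiv_conv => hd; apply: hno; by exists m.
    exact: (not_both B (OBj B j) (f3 B HB j hc) hn).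
  move=> i /andP[hi1 hij] m hm; apply: NNPP => hnc.
  have hd := nconv_div _ hnc.
  have h1 := bc B m i hm HB hd.
  apply: (not_both B (OBj B j)) hn.
  apply: (null_sub B _ _ _ h1) => w [vw ho]; split=> //.
  exact: obj_many2 ho hij.
move=> [[n [hn hd]] hconv].
have hA : null B (fun w => exists i, (1 <= i < j)%N /\ valid_ord B w /\ OBj B i w).
  apply: (null_union B (fun i w => (1 <= i < j)%N /\ valid_ord B w /\ OBj B i w)) => i.
  case: (boolP (1 <= i < j)%N) => hi.
    apply: (null_sub B _ _ _ (f3 B HB i (hconv i hi))) => w [_ h]; exact: h.
  move=> eps ep; exists (fun _ => [::]); split=> [w [] //|J].
  by rewrite big1 ?ltW // => ? _; rewrite /tot big_nil.
apply: (null_sub B _ _ _ (null_or B _ _ (bc B n j hn HB hd) hA)) => w [vw hno].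
case: (classify B HB w vw j hno) => [hm|[i [hi ho]]]; first by left.
by right; exists i.
Qed.
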